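(* Let $\sigma>0$, $t>0$, and $a\sim N(0,\sigma^2)$. Then \[ \mathbb{E}\,S_t^2(a)\ \le\ \sigma^4\sqrt{\frac{2}{\pi e}}\;t^{-2}\,e^{-t^2/(2\sigma^2)}, \] where $S_t$ is the soft thresholding operator.
   Context: The soft thresholding operator is $S_t(u)=u-t$ if $u>t$, $S_t(u)=0$ if $|u|\le t$, and $S_t(u)=u+t$ if $u<-t$. *)

(* Defs.v *)
From HB Require Import structures.
From mathcomp Require Import all_boot all_order all_algebra.
From mathcomp Require Import all_classical all_reals all_analysis.
Set Implicit Arguments. Unset Strict Implicit. Unset Printing Implicit Defensive.
Import Order.TTheory GRing.Theory Num.Theory.
Local Open Scope ring_scope.

Definition soft_thresh {R : realType} (t u : R) : R :=
  if t < u then u - t else if u < - t then u + t else 0.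

(* Main.v *)
From HB Require Import structures.
Require Import Defs.
From mathcomp Require Import all_boot all_order all_algebra.
From mathcomp Require Import all_classical all_reals all_analysis.
From mathcomp Require Import measurable_realfun.
From mathcomp Require Import ring lra.
Import Order.TTheory GRing.Theory Num.Theory.
Import numFieldNormedType.Exports.
Local Open Scope ring_scope.
Local Open Scope classical_set_scope.
Section S.
Context {R : realType}.
Notation mu := (@lebesgue_measure R).

Lemma normal_change (s : R) (f : R -> \bar R) : (forall x, (0 <= f x)%E) ->
  measurable_fun setT f ->
  (\int[normal_prob 0 s]_x f x = \int[mu]_x (f x * (normal_pdf 0 s x)%:E))%E.
Proof.
move=> f0 mf.
rewrite -(@Radon_Nikodym_SigmaFinite.change_of_variables _ _ R (normal_prob 0 s) mu (normal_prob_dominates 0 s))//.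
apply: ae_eq_integral => //.
- apply: emeasurable_funM => //.
  apply: (measurable_int mu).
  exact: Radon_Nikodym_SigmaFinite.f_integrable (normal_prob_dominates 0 s).
- apply: emeasurable_funM => //; apply/measurable_EFinP.
  exact: measurable_normal_pdf.
- apply: ae_eqe_mul2l => /=.
  apply: integral_ae_eq => //=.
  + exact: Radon_Nikodym_SigmaFinite.f_integrable (normal_prob_dominates 0 s).
  + apply/measurable_EFinP; exact: measurable_normal_pdf.
  + move=> E _ mE.
    by rewrite -Radon_Nikodym_SigmaFinite.f_integral//; exact: normal_prob_dominates.
Qed.

Lemma cont_of_der (f : R -> R) : (forall x, derivable f x 1) -> continuous f.
Proof.
move=> df x; apply: differentiable_continuous; exact/derivable1_diffP.
Qed.

Lemma yexp_bound (y : R) : 0 < y -> 0 <= (y + 1) * expR (- y) <= (y / 4)^-1.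
Proof.
move=> y0.
apply/andP; split; first by rewrite mulr_ge0 ?expR_ge0// addr_ge0// ltW.
rewrite expRN invf_div.
have e1 := @expR_ge1Dxn R y 1 (ltW y0).
rewrite ler_pdivrMr ?expR_gt0//.
apply: le_trans (ler_wpM2l _ e1); last by rewrite ltW// divr_gt0.
rewrite (_ : 2`!%:R = 2 :> R) //.
set z := 4 / y.
have zy : z * y = 4 by rewrite /z divfK// gt_eqF.
have z0 : 0 < z by rewrite /z divr_gt0.
have -> : z * (1 + y ^+ 2 / 2) = z + 2 * y.
  rewrite mulrDr mulr1; congr (_ + _).
  rewrite expr2 mulrA mulrA zy; field.
nra.
nra.
Qed.

Lemma lim_yexp : (fun y : R => (y + 1) * expR (- y)) @ +oo --> (0:R).
Proof.
apply: (@squeeze_cvgr _ _ _ _ (cst 0) (fun y => (y / 4)^-1)).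
- near=> y; apply: yexp_bound.
  near: y; exact: nbhs_pinfty_gt.
- exact: cvg_cst.
- have H : \forall y \near +oo, 0 < (fun y : R => y / 4) y.
    near=> y; rewrite divr_gt0//.
  apply/(gtr0_cvgV0 H).
  apply: gt0_cvgMly => //.
Unshelve. all: by end_near. Qed.

Lemma int_piece (K c t : R) : 0 < c -> 0 <= K ->
  (\int[mu]_(x in `[t, +oo[) (K * (x - t) * expR (- ((x - t) * c)))%:E
   = (K / c ^+ 2)%:E)%E.
Proof.
move=> c0 K0.
pose f := fun x : R^o => K * (x - t) * expR (- ((x - t) * c)).
pose F := fun x : R^o => - (K / c^+2) * (((x - t) * c + 1) * expR (- ((x - t) * c))).
have dF (x : R^o) : is_derive x 1 F (f x).
  apply: is_derive_eq.
  rewrite !scaler0 !subr0 !add0r !addr0 !scaler1 /GRing.scale/= /f.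
  by field; rewrite gt_eqF.
have cF : continuous F.
  by apply: cont_of_der => x; by case: (dF x).
have cf : continuous f.
  by apply: cont_of_der => x; exact: ex_derive.
have -> : (K / c ^+ 2)%:E = (0%R%:E - (F t)%:E)%E.
  rewrite /F subrr mul0r add0r oppr0 expR0 !mulr1 add0r -EFinN; congr EFin.
  by rewrite mulr1 opprK.
apply: (@ge0_continuous_FTC2y _ f F).
- move=> x tx; rewrite /f mulr_ge0 ?expR_ge0// mulr_ge0// subr_ge0//.
- exact: continuous_subspaceT.
- rewrite -(mulr0 (- (K / c ^+ 2))).
  apply: cvgM; first exact: cvg_cst.
  apply: (cvg_comp (fun x : R => (x - t) * c) (fun y => (y + 1) * expR (- y))); last exact: lim_yexp.
  apply: gt0_cvgMly => //; exact: cvg_addrr.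
- move=> x _; by case: (dF x).
- exact/cvg_at_right_filter/cF.
- move=> x _; rewrite derive1E; exact: derive_val.
Qed.

Lemma cont_m (t : R) : continuous (fun x : R => Num.max (`|x| - t) 0).
Proof.
move=> x.
apply: (continuous_max (f:=fun x : R^o => `|x| - t) (g:=cst 0)).
  apply: cvgB; last exact: cvg_cst.
  exact: norm_continuous.
exact: cvg_cst.
Qed.

Lemma cont_k (K c t : R) :
  continuous (fun x : R => K * Num.max (`|x| - t) 0 * expR (- ((`|x| - t) * c))).
Proof.
move=> x.
apply: cvgM; first by apply: cvgM; [exact: cvg_cst | exact: cont_m].
apply: continuous_comp; last exact: continuous_expR.
apply: cvgN; apply: cvgM; last exact: cvg_cst.
apply: cvgB; last exact: cvg_cst.
exact: norm_continuous.
Qed.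

Lemma soft_sq (t x : R) : 0 < t ->
  soft_thresh t x ^+ 2 = (Num.max (`|x| - t) 0) ^+ 2.
Proof.
move=> t0; rewrite /soft_thresh; case: ifP => [tx|ntx].
  have x0 : 0 < x by exact: lt_trans t0 tx.
  by rewrite gtr0_norm// max_l// subr_ge0 ltW.
case: ifP => [xt|nxt].
  have x0 : x < 0 by apply: lt_trans xt _; rewrite oppr_lt0.
  rewrite ltr0_norm// max_l; last by rewrite subr_ge0 lerNr ltW.
  by rewrite -sqrrN opprD.
rewrite max_r ?expr0n//.
by rewrite subr_le0 ler_norml; apply/andP; split; rewrite leNgt ?nxt ?ntx.
Qed.

Lemma aux_u (s u : R) : 0 < s -> 0 <= u ->
  u * expR (- (u ^+ 2 / (2 * s ^+ 2))) <= s * expR (- 2^-1).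
Proof.
move=> s0 u0.
rewrite expRN ler_pdivrMr ?expR_gt0// -mulrA -expRD.
apply: le_trans (ler_wpM2l (ltW s0) (expR_ge1Dx _)).
have -> : s * (1 + (- 2^-1 + u ^+ 2 / (2 * s ^+ 2))) = (s ^+ 2 + u ^+ 2) / (2 * s).
  by field; rewrite gt_eqF.
rewrite ler_pdivlMr ?mulr_gt0//.
have := sqr_ge0 (u - s); rewrite sqrrB => h; lra.
Qed.

Lemma pw (s t x : R) : 0 < s -> 0 < t ->
  (Num.max (`|x| - t) 0) ^+ 2 * normal_pdf 0 s x <=
  (normal_peak s * expR (- t ^+ 2 / (2 * s ^+ 2)) * s * expR (- 2^-1))
   * Num.max (`|x| - t) 0 * expR (- ((`|x| - t) * (t / s ^+ 2))).
Proof.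
move=> s0 t0.
rewrite normal_pdfE ?gt_eqF// /normal_fun.
have [xt|xt] := leP (`|x| - t) 0.
  by rewrite expr0n/= mul0r mulr0 mul0r.

set u := `|x| - t.
have u0 : 0 <= u by exact: ltW.
have xu : (x - 0) ^+ 2 = (u + t) ^+ 2 by rewrite subr0 /u subrK real_normK ?num_real.
have -> : - (x - 0) ^+ 2 / (s ^+ 2 *+ 2) =
   - t ^+ 2 / (2 * s ^+ 2) + (- (u * (t / s ^+ 2)) + - (u ^+ 2 / (2 * s ^+ 2))).
  by rewrite xu; field; rewrite gt_eqF.
rewrite !expRD.
set P := normal_peak s. set A := expR (- t ^+ 2 / (2 * s ^+ 2)).
set B := expR (- (u * (t / s ^+ 2))). set C := expR (- (u ^+ 2 / (2 * s ^+ 2))).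
have -> : u ^+ 2 * (P * (A * (B * C))) = (P * A * B * u) * (u * C) by ring.
have -> : P * A * s * expR (- 2^-1) * u * B = (P * A * B * u) * (s * expR (- 2^-1)) by ring.
apply: ler_wpM2l; last exact: aux_u.
by rewrite !mulr_ge0 ?normal_peak_ge0 ?expR_ge0.
Qed.
End S.

Local Open Scope ring_scope.
Theorem lemma4p6 (R : realType) (sigma t : R) (hsigma : 0 < sigma) (ht : 0 < t) :
  (\int[normal_prob 0 sigma]_x ((soft_thresh t x) ^+ 2)%:E <=
   (sigma ^+ 4 * Num.sqrt (2 / (pi * expR 1)) * t ^- 2
      * expR (- t ^+ 2 / (2 * sigma ^+ 2)))%:E)%E.
Proof.
set c := t / sigma ^+ 2.
have c0 : 0 < c by rewrite divr_gt0// exprn_gt0.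
set K := normal_peak sigma * expR (- t ^+ 2 / (2 * sigma ^+ 2)) * sigma * expR (- 2^-1).
have K0 : 0 <= K by rewrite !mulr_ge0 ?normal_peak_ge0 ?expR_ge0 ?ltW.
pose k := fun x : R => K * Num.max (`|x| - t) 0 * expR (- ((`|x| - t) * c)).
pose m2 := fun x : R => (Num.max (`|x| - t) 0) ^+ 2.
have cm2 : continuous m2.
  have -> : m2 = (fun x => Num.max (`|x| - t) 0 * Num.max (`|x| - t) 0).
    by apply/funext => x; rewrite /m2 expr2.
  move=> x; apply: cvgM; exact: cont_m.
have k0 x : 0 <= k x.
  rewrite /k; apply: mulr_ge0; last exact: expR_ge0.
  apply: mulr_ge0 => //.
  by rewrite comparable_le_max ?real_comparable ?num_real// lexx orbT.
under eq_integral => x _ do rewrite soft_sq//.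
rewrite normal_change; last 2 first.
  by move=> x; rewrite lee_fin sqr_ge0.
  by apply/measurable_EFinP; exact: continuous_measurable_fun.
apply: (@le_trans _ _ (\int[lebesgue_measure]_x (k x)%:E)%E).
  apply: ge0_le_integral => //.
  - by move=> x _; rewrite -EFinM lee_fin mulr_ge0 ?sqr_ge0 ?normal_pdf_ge0.
  - apply: emeasurable_funM; apply/measurable_EFinP.
      exact: continuous_measurable_fun.
    exact: measurable_normal_pdf.
  - apply/measurable_EFinP; exact: continuous_measurable_fun (cont_k K c t).
  - by move=> x _; rewrite -EFinM lee_fin; exact: pw.
rewrite ge0_symfun_integralT//; last 2 first.
  exact: cont_k.
  by move=> x; rewrite /k /= normrN.
have IP := @int_piece R K c t c0 K0.
rewrite integral_mkcond in IP.
rewrite integral_mkcond.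
rewrite [X in (_ * X)%E](_ : _ = \int[lebesgue_measure]_x ((((fun x : R => (K * (x - t) * expR (- ((x - t) * c)))%:E) \_ `[t, +oo[)) x))%E; last first.
  apply: eq_integral => x _; rewrite !patchE.
  case: ifP => x0; case: ifP => xt.
  - move: xt; rewrite in_setE/= in_itv/= andbT => xt.
    move: x0; rewrite in_setE/= => x0.
    by rewrite /k ger0_norm// max_l// subr_ge0.
  - move/negP: xt; rewrite in_setE/= in_itv/= andbT => /negP; rewrite -ltNge => xt.
    move: x0; rewrite in_setE/= => x0.
    rewrite /k ger0_norm// max_r ?mulr0 ?mul0r//.
    by rewrite subr_le0 ltW.
  - move: xt; rewrite in_setE/= in_itv/= andbT => xt.
    move/negP: x0; rewrite in_setE/= => /negP; rewrite -ltNge => x0.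
    by have := lt_le_trans x0 (le_trans (ltW ht) xt); rewrite ltxx.
  - by [].
rewrite IP -EFinM lee_fin /K /c.
set P := normal_peak sigma.
set A := expR (- t ^+ 2 / (2 * sigma ^+ 2)).
set E := expR (- 2^-1).
have s0 : sigma != 0 by rewrite gt_eqF.
have pi0 : pi != 0 :> R by rewrite gt_eqF// pi_gt0.
have hE : E ^+ 2 = (expR 1)^-1.
  by rewrite /E -expRM_natr -expRN; congr expR; field.
have hP : P ^+ 2 = (sigma ^+ 2 * pi *+ 2)^-1.
  rewrite /P /normal_peak exprVn sqr_sqrtr//.
  by rewrite mulrn_wge0// mulr_ge0 ?sqr_ge0// pi_ge0.
have hS : Num.sqrt (2 / (pi * expR 1)) = 2 * P * sigma * E.
  have -> : 2 / (pi * expR 1) = (2 * P * sigma * E) ^+ 2.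
    rewrite !exprMn hE hP.
    move: pi0; generalize (@pi R) => p p0.
    by field; rewrite p0 s0 expR_eq0.
  rewrite sqrtr_sqr ger0_norm// !mulr_ge0 ?normal_peak_ge0 ?expR_ge0 ?ltW//.
rewrite hS le_eqVlt; apply/orP; left; apply/eqP.
field.
by rewrite s0 gt_eqF.
Qed.
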